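(* Let $V$ be countably infinite with a fixed bijection $\xi:V\to\mathbb N$. For every finite simple graph $H$ and every $G\in\mathscr{G}(V)$, the set $S(H,G)$ is a closed nonempty subset of $[0,1]$. For $H=K_2$ (a single edge), $S(K_2,G)$ is a closed subinterval $[a,b]$ of $[0,1]$ (possibly with $a=b$). Conversely, for every $0\le a\le b\le1$ there exists $G\in\mathscr{G}(V)$ with $S(K_2,G)=[a,b]$.
   Context: $K_V$ is the set of $2$-element subsets of $V$; $\mathscr{G}(V)$ is the set of simple graphs on $V$ identified with their edge sets. For $G\in\mathscr{G}(V)$ and $n\in\mathbb N$, $G_V[n]$ is the finite induced subgraph of $G$ on the vertices $\xi^{-1}(1),\dots,\xi^{-1}(n)$. For finite simple graphs $H$ and $F$, $\mathrm{ind}(H,F)$ is the number of injective maps $V(H)\to V(F)$ that are isomorphisms of $H$ onto the induced subgraph of $F$ on the image, and $t_{\mathrm{ind}}(H,F) := \mathrm{ind}(H,F)\,(|V(F)|-|V(H)|)!/|V(F)|!$ (taken to be $0$ if $|V(F)|<|V(H)|$). $S(H,G)$ is the set of subsequential limits (accumulation points) of the sequence $n\mapsto t_{\mathrm{ind}}(H,G_V[n])$. Note $t_{\mathrm{ind}}(K_2,F)$ equals the edge density $e(F):=|E(F)|/\binom{|V(F)|}{2}$. *)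

(* Defs.v *)
From Stdlib Require Import Reals Lra Arith List Bool.
From Stdlib Require Import Rtopology.
Import ListNotations.
Open Scope R_scope.

Definition simple_graph {W : Type} (E : W -> W -> bool) : Prop :=
  (forall u v, E u v = E v u) /\ (forall u, E u u = false).

(* A finite simple graph with vertex set {0,...,k-1}: only values of E on
   that set matter. *)
Definition finite_simple_graph (k : nat) (E : nat -> nat -> bool) : Prop :=
  (forall i j, (i < k)%nat -> (j < k)%nat -> E i j = E j i) /\
  (forall i, (i < k)%nat -> E i i = false).

Definition K2_edges (i j : nat) : bool :=
  ((i =? 0) && (j =? 1)) || ((i =? 1) && (j =? 0)).

(* all maps {0..k-1} -> {0..n-1}, as lists of length k *)
Fixpoint tuples (k n : nat) : list (list nat) :=
  match k with
  | O => [[]]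
  | S k' => flat_map (fun l => map (fun x => x :: l) (seq 0 n)) (tuples k' n)
  end.

Fixpoint nodupb (l : list nat) : bool :=
  match l with
  | [] => true
  | x :: r => negb (existsb (Nat.eqb x) r) && nodupb r
  end.

(* phi (as a list) is an isomorphism of H onto the induced subgraph of F on
   its image *)
Definition is_ind_emb (k : nat) (H : nat -> nat -> bool)
  (F : nat -> nat -> bool) (phi : list nat) : bool :=
  nodupb phi &&
  forallb (fun i => forallb (fun j =>
      (i =? j) || Bool.eqb (H i j) (F (nth i phi 0%nat) (nth j phi 0%nat)))
    (seq 0 k)) (seq 0 k).

Definition ind (k : nat) (H : nat -> nat -> bool) (n : nat)
  (F : nat -> nat -> bool) : nat :=
  length (filter (is_ind_emb k H F) (tuples k n)).

Definition t_ind (k : nat) (H : nat -> nat -> bool) (n : nat)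
  (F : nat -> nat -> bool) : R :=
  if (n <? k)%nat then 0
  else INR (ind k H n F) * INR (fact (n - k)) / INR (fact n).

(* G_V[n]: induced subgraph of G on xi^{-1}(0),...,xi^{-1}(n-1),
   with vertex xi^{-1}(i) relabelled i. *)
Definition G_sub {V : Type} (xiinv : nat -> V) (G : V -> V -> bool)
  (i j : nat) : bool := G (xiinv i) (xiinv j).

Definition S_set {V : Type} (xiinv : nat -> V) (k : nat)
  (H : nat -> nat -> bool) (G : V -> V -> bool) (x : R) : Prop :=
  forall eps, eps > 0 -> forall N : nat, exists n : nat, (n >= N)%nat /\
    Rabs (t_ind k H n (G_sub xiinv G) - x) < eps.

(* Main.v *)
Require Import Defs.
From Stdlib Require Import Reals Rtopology.
From Stdlib Require Import Lra Lia List Arith Bool Classical ZArith FunctionalExtensionality.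
Import ListNotations.
Open Scope R_scope.

Definition acc (u : nat -> R) (x : R) : Prop :=
  forall eps, eps > 0 -> forall N : nat, exists n : nat, (n >= N)%nat /\ Rabs (u n - x) < eps.

Lemma acc_nonempty u : (forall n, 0 <= u n <= 1) -> exists x, acc u x.
Proof.
  intros Hu. destruct (Bolzano_Weierstrass u (fun c => 0 <= c <= 1) (compact_P3 0 1) Hu) as [l Hl].
  exists l. intros eps He N.
  destruct (Hl (disc l (mkposreal eps He)) N) as [p [Hp Hv]].
  - exists (mkposreal eps He). intros y Hy. exact Hy.
  - exists p. split; [lia|]. exact Hv.
Qed.

Lemma acc_bound u : (forall n, 0 <= u n <= 1) -> forall x, acc u x -> 0 <= x <= 1.
Proof.
  intros Hu x Hx. split; apply Rnot_lt_le; intro Hlt.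
  - destruct (Hx (-x) ltac:(lra) 0%nat) as [n [_ Hn]]. specialize (Hu n).
    apply Rabs_def2 in Hn. lra.
  - destruct (Hx (x-1) ltac:(lra) 0%nat) as [n [_ Hn]]. specialize (Hu n).
    apply Rabs_def2 in Hn. lra.
Qed.

Lemma acc_closed u : closed_set (acc u).
Proof.
  intros x Hx. unfold complementary in Hx.
  apply not_all_ex_not in Hx. destruct Hx as [eps Hx].
  apply imply_to_and in Hx. destruct Hx as [He Hx].
  apply not_all_ex_not in Hx. destruct Hx as [N HN].
  assert (HN' : forall n, (n >= N)%nat -> Rabs (u n - x) >= eps).
  { intros n Hn. apply Rnot_lt_ge. intro H. apply HN. exists n. auto. }
  exists (mkposreal (eps/2) ltac:(lra)). intros y Hy. unfold disc in Hy; simpl in Hy.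
  unfold complementary. intro Hacc.
  destruct (Hacc (eps/2) ltac:(lra) N) as [n [Hn Hn2]].
  specialize (HN' n Hn).
  assert (Rabs (u n - x) <= Rabs (u n - y) + Rabs (y - x)).
  { replace (u n - x) with ((u n - y) + (y - x)) by ring. apply Rabs_triang. }
  lra.
Qed.

(* discrete intermediate value *)
Lemma acc_interval u a b :
  (forall eps, eps > 0 -> exists N, forall n, (n >= N)%nat -> Rabs (u (S n) - u n) < eps) ->
  acc u a -> acc u b -> forall x, a <= x <= b -> acc u x.
Proof.
  intros Hinc Ha Hb x Hx eps He N.
  destruct (Hinc eps He) as [N' HN'].
  destruct (Ha eps He (Nat.max N N')) as [n1 [Hn1 H1]].
  destruct (Hb eps He n1) as [n2 [Hn2 H2]].
  apply Rabs_def2 in H1. apply Rabs_def2 in H2.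
  destruct (Rlt_le_dec (x - eps) (u n1)) as [Hc|Hc].
  - exists n1. split; [lia|]. apply Rabs_def1; lra.
  - assert (Hind : forall m, (exists n, (n1 <= n <= n1 + m)%nat /\ Rabs (u n - x) < eps)
                            \/ u (n1 + m)%nat <= x - eps).
    { induction m as [|m IH].
      - right. rewrite Nat.add_0_r. exact Hc.
      - destruct IH as [[n [Hn Hn']]|IH].
        + left. exists n. split; [lia|exact Hn'].
        + destruct (Rle_lt_dec (u (n1 + S m)%nat) (x - eps)) as [Hd|Hd].
          * right. exact Hd.
          * left. exists (n1 + S m)%nat. split; [lia|].
            assert (Hs := HN' (n1 + m)%nat ltac:(lia)).
            rewrite <- Nat.add_succ_r in Hs. apply Rabs_def2 in Hs.
            apply Rabs_def1; lra. }
    destruct (Hind (n2 - n1)%nat) as [[n [Hn Hn']]|Hd].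
    + exists n. split; [lia|exact Hn'].
    + replace (n1 + (n2 - n1))%nat with n2 in Hd by lia. lra.
Qed.

Lemma acc_is_interval u :
  (forall n, 0 <= u n <= 1) ->
  (forall eps, eps > 0 -> exists N, forall n, (n >= N)%nat -> Rabs (u (S n) - u n) < eps) ->
  exists a b, 0 <= a <= b /\ b <= 1 /\ forall x, acc u x <-> a <= x <= b.
Proof.
  intros Hu Hinc.
  destruct (acc_nonempty u Hu) as [x0 Hx0].
  assert (Hbd := acc_bound u Hu).
  destruct (completeness (acc u)) as [b [Hb1 Hb2]].
  { exists 1. intros y Hy. apply (Hbd y Hy). }
  { exists x0; exact Hx0. }
  destruct (completeness (fun y => acc u (- y))) as [na [Ha1 Ha2]].
  { exists 0. intros y Hy. apply Hbd in Hy. lra. }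
  { exists (- x0). rewrite Ropp_involutive. exact Hx0. }
  assert (Haccb : acc u b).
  { intros eps He N.
    assert (Hex : exists y, acc u y /\ b - eps/2 < y).
    { apply NNPP. intro Hn. assert (b <= b - eps/2); [|lra].
      apply Hb2. intros y Hy. apply Rnot_lt_le. intro Hl. apply Hn. exists y. auto. }
    destruct Hex as [y [Hy Hy2]]. assert (y <= b) by (apply Hb1; auto).
    destruct (Hy (eps/2) ltac:(lra) N) as [n [Hn Hn2]]. exists n. split; auto.
    apply Rabs_def2 in Hn2. apply Rabs_def1; lra. }
  assert (Hacca : acc u (- na)).
  { intros eps He N.
    assert (Hex : exists y, acc u (- y) /\ na - eps/2 < y).
    { apply NNPP. intro Hn. assert (na <= na - eps/2); [|lra].
      apply Ha2. intros y Hy. apply Rnot_lt_le. intro Hl. apply Hn. exists y. auto. }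
    destruct Hex as [y [Hy Hy2]]. assert (y <= na) by (apply Ha1; auto).
    destruct (Hy (eps/2) ltac:(lra) N) as [n [Hn Hn2]]. exists n. split; auto.
    apply Rabs_def2 in Hn2. apply Rabs_def1; lra. }
  exists (- na), b.
  assert (H1 : forall x, acc u x -> - na <= x <= b).
  { intros x Hx. split.
    - assert (- x <= na); [apply Ha1; rewrite Ropp_involutive; auto | lra].
    - apply Hb1; auto. }
  destruct (Hbd _ Hacca). destruct (Hbd _ Haccb). destruct (H1 _ Hx0).
  split; [lra|]. split; [lra|].
  intros x. split; [apply H1|]. apply acc_interval; auto.
Qed.

Lemma filter_le {A} (f g : A -> bool) l :
  (forall x, f x = true -> g x = true) -> (length (filter f l) <= length (filter g l))%nat.
Proof.
  intros H. induction l as [|x l IH]; simpl; auto.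
  destruct (f x) eqn:E.
  - rewrite (H x E). simpl. lia.
  - destruct (g x); simpl; lia.
Qed.

Lemma filter_compl {A} (f : A -> bool) l :
  (length (filter f l) + length (filter (fun x => negb (f x)) l) = length l)%nat.
Proof. induction l as [|x l IH]; simpl; auto. destruct (f x); simpl; lia. Qed.

Lemma tuples_spec k n l : In l (tuples k n) -> length l = k /\ Forall (fun x => (x < n)%nat) l.
Proof.
  revert l. induction k as [|k IH]; intros l Hl; simpl in Hl.
  - destruct Hl as [<-|[]]. split; auto.
  - apply in_flat_map in Hl. destruct Hl as [l' [Hl' Hin]].
    apply in_map_iff in Hin. destruct Hin as [x [<- Hx]].
    apply in_seq in Hx. destruct (IH l' Hl'). simpl. split; auto.
    constructor; auto; lia.
Qed.

Lemma nodupb_NoDup l : nodupb l = true -> NoDup l.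
Proof.
  induction l as [|x l IH]; simpl; intros H; constructor.
  - apply andb_prop in H. destruct H as [H _]. intro Hin.
    assert (existsb (Nat.eqb x) l = true).
    { apply existsb_exists. exists x. split; auto. apply Nat.eqb_refl. }
    rewrite H0 in H. discriminate.
  - apply andb_prop in H. apply IH; tauto.
Qed.

Lemma filter_map_len {A B} (f : B -> bool) (h : A -> B) l :
  length (filter f (map h l)) = length (filter (fun x => f (h x)) l).
Proof. induction l as [|x l IH]; simpl; auto. destruct (f (h x)); simpl; auto. Qed.

Definition Nd k n := length (filter nodupb (tuples k n)).

Lemma count_notin l k n : NoDup l -> length l = k -> Forall (fun x => (x < n)%nat) l ->
  (length (filter (fun x => negb (existsb (Nat.eqb x) l)) (seq 0 n)) <= n - k)%nat.
Proof.
  intros Hnd Hlen Hf.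
  assert (Hk : (k <= length (filter (fun x => existsb (Nat.eqb x) l) (seq 0 n)))%nat).
  { rewrite <- Hlen. apply NoDup_incl_length; auto. intros x Hx.
    apply filter_In. split.
    - apply in_seq. rewrite Forall_forall in Hf. specialize (Hf x Hx). lia.
    - apply existsb_exists. exists x. split; auto. apply Nat.eqb_refl. }
  pose proof (filter_compl (fun x => existsb (Nat.eqb x) l) (seq 0 n)).
  rewrite length_seq in H. lia.
Qed.

Lemma Nd_step k n : (Nd (S k) n <= Nd k n * (n - k))%nat.
Proof.
  unfold Nd. simpl.
  assert (Hs : forall l, In l (tuples k n) -> length l = k /\ Forall (fun x => (x < n)%nat) l)
    by (intros; apply tuples_spec; auto).
  induction (tuples k n) as [|l L IH]; simpl; [lia|].
  rewrite filter_app, length_app.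
  assert (IH' := IH (fun l' H => Hs l' (or_intror H))).
  destruct (Hs l (or_introl eq_refl)) as [Hl1 Hl2].
  destruct (nodupb l) eqn:E.
  - simpl.
    assert ((length (filter nodupb (map (fun x => x :: l) (seq 0 n))) <= n - k)%nat).
    { rewrite filter_map_len. simpl.
      rewrite (filter_ext _ (fun x => negb (existsb (Nat.eqb x) l))).
      - apply count_notin; auto. apply nodupb_NoDup; auto.
      - intros x. rewrite E. destruct (existsb _ _); reflexivity. }
    lia.
  - assert (length (filter nodupb (map (fun x => x :: l) (seq 0 n))) = 0%nat).
    { clear IH IH' Hs. induction (seq 0 n) as [|y s IHs]; simpl; auto. rewrite E, andb_false_r. exact IHs. }
    lia.
Qed.

Lemma Nd_fact k n : (k <= n)%nat -> (Nd k n * fact (n - k) <= fact n)%nat.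
Proof.
  induction k as [|k IH]; intros Hk.
  - unfold Nd. simpl. rewrite Nat.sub_0_r. lia.
  - assert (Hs := Nd_step k n). specialize (IH ltac:(lia)).
    assert (Hf : fact (n - k) = ((n - k) * fact (n - S k))%nat).
    { replace (n - k)%nat with (S (n - S k)) by lia. simpl. lia. }
    rewrite Hf in IH.
    apply Nat.le_trans with (Nd k n * (n - k) * fact (n - S k))%nat.
    + apply Nat.mul_le_mono_r. exact Hs.
    + rewrite <- Nat.mul_assoc. exact IH.
Qed.

Lemma ind_le_Nd k H n F : (Defs.ind k H n F <= Nd k n)%nat.
Proof.
  unfold Defs.ind, Nd. apply filter_le. intros x Hx. unfold is_ind_emb in Hx.
  apply andb_prop in Hx. tauto.
Qed.

Lemma t_ind_bound k H n F : 0 <= t_ind k H n F <= 1.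
Proof.
  unfold t_ind. destruct (n <? k)%nat eqn:E; [lra|].
  apply Nat.ltb_ge in E.
  assert (Hf := INR_fact_lt_0 n). assert (Hf2 := INR_fact_lt_0 (n - k)).
  assert (Hi := pos_INR (Defs.ind k H n F)).
  assert (Hle : (Defs.ind k H n F * fact (n - k) <= fact n)%nat).
  { apply Nat.le_trans with (Nd k n * fact (n - k))%nat.
    - apply Nat.mul_le_mono_r. apply ind_le_Nd.
    - apply Nd_fact; auto. }
  apply le_INR in Hle. rewrite mult_INR in Hle.
  split.
  - apply Rmult_le_pos; [apply Rmult_le_pos; lra|]. left. apply Rinv_0_lt_compat. lra.
  - unfold Rdiv. apply Rmult_le_reg_r with (INR (fact n)); auto.
    rewrite Rmult_assoc, Rinv_l by lra. lra.
Qed.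

Fixpoint sum_to (f : nat -> nat) (n : nat) : nat :=
  match n with O => O | S m => (sum_to f m + f m)%nat end.

Lemma sum_to_plus f g n : sum_to (fun i => f i + g i)%nat n = (sum_to f n + sum_to g n)%nat.
Proof. induction n; simpl; lia. Qed.

Lemma sum_to_ext f g n : (forall i, (i < n)%nat -> f i = g i) -> sum_to f n = sum_to g n.
Proof. induction n; simpl; intros H; auto. rewrite IHn, H; auto. Qed.

Lemma sum_to_le f n c : (forall i, (i < n)%nat -> (f i <= c)%nat) -> (sum_to f n <= n * c)%nat.
Proof. induction n; simpl; intros H; auto. assert (H' := H n ltac:(lia)).
  assert (IH := IHn ltac:(intros; apply H; lia)). lia. Qed.

Lemma sum_to_const c n : sum_to (fun _ => c) n = (n * c)%nat.
Proof. induction n; simpl; lia. Qed.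

Lemma list_sum_seq f n : list_sum (map f (seq 0 n)) = sum_to f n.
Proof. induction n; auto. rewrite seq_S, map_app, list_sum_app. simpl. rewrite IHn. lia. Qed.

Lemma len_filter_flat {A B} (f : B -> bool) (g : A -> list B) l :
  length (filter f (flat_map g l)) = list_sum (map (fun a => length (filter f (g a))) l).
Proof. induction l; simpl; auto. rewrite filter_app, length_app. lia. Qed.

Lemma len_filter_map {A B} (f : B -> bool) (h : A -> B) l :
  length (filter f (map h l)) = list_sum (map (fun x => Nat.b2n (f (h x))) l).
Proof. induction l; simpl; auto. destruct (f (h a)); simpl; lia. Qed.

Definition q (F : nat -> nat -> bool) x y := negb (x =? y)%nat && F x y && F y x.

Definition Qs n F := sum_to (fun y => sum_to (fun x => Nat.b2n (q F x y)) n) n.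
Definition kk n (F : nat -> nat -> bool) := sum_to (fun x => Nat.b2n (F n x && F x n)) n.

Lemma emb2 F x y : is_ind_emb 2 K2_edges F [x; y] = q F x y.
Proof.
  unfold is_ind_emb, q. simpl. destruct (x =? y)%nat, (F x y), (F y x); reflexivity.
Qed.

Lemma ind2 n F : Defs.ind 2 K2_edges n F = Qs n F.
Proof.
  unfold Defs.ind. simpl. rewrite app_nil_r, len_filter_flat, map_map.
  unfold Qs. rewrite <- list_sum_seq. f_equal. apply map_ext. intros y.
  rewrite len_filter_map, list_sum_seq. apply sum_to_ext. intros i _. rewrite emb2. auto.
Qed.

Lemma Qs_step n F : Qs (S n) F = (Qs n F + 2 * kk n F)%nat.
Proof.
  unfold Qs, kk. simpl.
  rewrite sum_to_plus.
  assert (E1 : sum_to (fun y => Nat.b2n (q F n y)) n = sum_to (fun x => Nat.b2n (F n x && F x n)) n).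
  { apply sum_to_ext. intros i Hi. unfold q.
    replace (n =? i)%nat with false by (symmetry; apply Nat.eqb_neq; lia). reflexivity. }
  assert (E2 : sum_to (fun x => Nat.b2n (q F x n)) n = sum_to (fun x => Nat.b2n (F n x && F x n)) n).
  { apply sum_to_ext. intros i Hi. unfold q.
    replace (i =? n)%nat with false by (symmetry; apply Nat.eqb_neq; lia). simpl.
    destruct (F i n), (F n i); reflexivity. }
  rewrite E1, E2. unfold q. rewrite Nat.eqb_refl. simpl. lia.
Qed.

Lemma kk_le n F : (kk n F <= n)%nat.
Proof.
  unfold kk. rewrite <- (Nat.mul_1_r n) at 2. apply sum_to_le. intros i _.
  destruct (F n i && F i n); simpl; lia.
Qed.

Lemma t_ind2 n F : (2 <= n)%nat ->
  t_ind 2 K2_edges n F = INR (Qs n F) / (INR n * INR (n - 1)).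
Proof.
  intros Hn. unfold t_ind. destruct (n <? 2)%nat eqn:E; [apply Nat.ltb_lt in E; lia|].
  rewrite ind2. destruct n as [|[|m]]; try lia.
  replace (S (S m) - 2)%nat with m by lia. replace (S (S m) - 1)%nat with (S m) by lia.
  change (fact (S (S m))) with (S (S m) * fact (S m))%nat.
  change (fact (S m)) with (S m * fact m)%nat.
  rewrite !mult_INR. assert (H1 := INR_fact_neq_0 m).
  assert (H2 := pos_INR m). rewrite !S_INR. field. split; [lra|split; lra].
Qed.

Lemma t_ind2_step n F : (2 <= n)%nat ->
  (INR n + 1) * t_ind 2 K2_edges (S n) F =
  (INR n - 1) * t_ind 2 K2_edges n F + 2 * INR (kk n F) / INR n.
Proof.
  intros Hn. rewrite !t_ind2 by lia. rewrite Qs_step.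
  replace (S n - 1)%nat with n by lia.
  rewrite plus_INR, mult_INR, S_INR, minus_INR by lia. simpl (INR 1).
  assert (H2 : 2 <= INR n) by (replace 2 with (INR 2) by (simpl; lra); apply le_INR; lia).
  simpl (INR 2). rewrite S_INR. field. lra.
Qed.

Lemma INR_unb r : exists N : nat, r < INR N.
Proof.
  destruct (archimed (Rabs r)) as [H1 _].
  assert (Hz : (0 < up (Rabs r))%Z).
  { apply lt_IZR. assert (0 <= Rabs r) by apply Rabs_pos. lra. }
  exists (Z.to_nat (up (Rabs r))). rewrite INR_IZR_INZ, Z2Nat.id by lia.
  assert (r <= Rabs r) by apply RRle_abs. lra.
Qed.

Lemma eventually_small c eps : eps > 0 -> exists N : nat, (2 <= N)%nat /\
  forall n, (n >= N)%nat -> c < (INR n - 1) * eps.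
Proof.
  intros He. destruct (INR_unb (c / eps + 1)) as [N HN].
  exists (Nat.max N 2). split; [lia|]. intros n Hn.
  assert (INR N <= INR n) by (apply le_INR; lia).
  assert (c / eps < INR n - 1) by lra.
  apply Rmult_lt_compat_r with (r := eps) in H0; auto.
  unfold Rdiv in H0. rewrite Rmult_assoc, Rinv_l in H0 by lra. lra.
Qed.

Lemma incr2 F n : (2 <= n)%nat ->
  Rabs (t_ind 2 K2_edges (S n) F - t_ind 2 K2_edges n F) <= 2 / (INR n + 1).
Proof.
  intros Hn. assert (Hs := t_ind2_step n F Hn).
  assert (H2 : 2 <= INR n) by (replace 2 with (INR 2) by (simpl; lra); apply le_INR; lia).
  assert (Hk := le_INR _ _ (kk_le n F)). assert (Hk0 := pos_INR (kk n F)).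
  set (u := t_ind 2 K2_edges n F) in *. set (u' := t_ind 2 K2_edges (S n) F) in *.
  assert (Hu := t_ind_bound 2 K2_edges n F). fold u in Hu.
  set (r := INR (kk n F) / INR n).
  assert (Hr : 0 <= r <= 1).
  { unfold r. split. apply Rmult_le_pos; [lra|left; apply Rinv_0_lt_compat; lra].
    apply Rmult_le_reg_r with (INR n); [lra|]. unfold Rdiv. rewrite Rmult_assoc, Rinv_l; lra. }
  assert (Hs' : (INR n + 1) * u' = (INR n - 1) * u + 2 * r) by (rewrite Hs; unfold r; field; lra).
  assert (Hd : u' - u = (2 * r - 2 * u) / (INR n + 1)).
  { apply Rmult_eq_reg_l with (INR n + 1); [|lra]. field_simplify; [|lra]. lra. }
  rewrite Hd. unfold Rdiv. rewrite Rabs_mult, Rabs_inv, (Rabs_right (INR n + 1)) by lra.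
  apply Rmult_le_compat_r; [left; apply Rinv_0_lt_compat; lra|].
  apply Rabs_le. lra.
Qed.

Lemma incr_small F : forall eps, eps > 0 -> exists N, forall n, (n >= N)%nat ->
  Rabs (t_ind 2 K2_edges (S n) F - t_ind 2 K2_edges n F) < eps.
Proof.
  intros eps He. destruct (eventually_small 2 eps He) as [N [HN HN2]].
  exists N. intros n Hn. eapply Rle_lt_trans; [apply incr2; lia|].
  specialize (HN2 n Hn). assert (H2 : 2 <= INR n) by (replace 2 with (INR 2) by (simpl; lra); apply le_INR; lia).
  apply Rmult_lt_reg_r with (INR n + 1); [lra|]. unfold Rdiv. rewrite Rmult_assoc, Rinv_l by lra. nra.
Qed.

Lemma decay (y : nat -> R) s m : (2 <= s)%nat ->
  (forall n, (s <= n < m)%nat -> (INR n + 1) * y (S n) <= (INR n - 1) * y n \/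
                                 (INR n + 1) * y (S n) <= 2) ->
  y s <= 1 -> forall n, (s <= n <= m)%nat ->
  INR n * (INR n - 1) * y n <= INR s * (INR s - 1) + 2 * INR n.
Proof.
  intros Hs Hstep Hy0.
  assert (HS : 2 <= INR s) by (replace 2 with (INR 2) by (simpl; lra); apply le_INR; lia).
  assert (forall d, (s + d <= m)%nat -> INR (s + d) * (INR (s + d) - 1) * y (s + d)%nat <= INR s * (INR s - 1) + 2 * INR (s + d)).
  { induction d as [|d IH]; intros Hd.
    - rewrite Nat.add_0_r. assert (0 <= INR s * (INR s - 1)) by nra.
      assert (INR s * (INR s - 1) * y s <= INR s * (INR s - 1)) by (rewrite <- (Rmult_1_r (INR s * (INR s - 1))) at 2; apply Rmult_le_compat_l; lra).
      lra.
    - specialize (IH ltac:(lia)). rewrite Nat.add_succ_r.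
      set (n := (s + d)%nat) in *.
      assert (Hn : 2 <= INR n) by (replace 2 with (INR 2) by (simpl; lra); apply le_INR; lia).
      rewrite S_INR.
      destruct (Hstep n ltac:(lia)) as [H|H].
      + assert (INR n * ((INR n + 1) * y (S n)) <= INR n * ((INR n - 1) * y n)) by (apply Rmult_le_compat_l; lra).
        nra.
      + assert (INR n * ((INR n + 1) * y (S n)) <= INR n * 2) by (apply Rmult_le_compat_l; lra).
        assert (0 <= INR s * (INR s - 1)) by nra.
        nra. }
  intros n Hn. replace n with (s + (n - s))%nat by lia. apply H. lia.
Qed.

Lemma L1 r D D' T c0 : 2 <= r -> 0 <= D <= 1 -> 0 <= c0 <= 1 -> c0 <= T ->
  (r + 1) * D' = (r - 1) * D + 2 * (if Rlt_dec D T then 1 else 0) ->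
  (r + 1) * (c0 - D') <= (r - 1) * (c0 - D) \/ (r + 1) * (c0 - D') <= 2.
Proof.
  intros Hr HD Hc HT Hs. destruct (Rlt_dec D T) as [Hl|Hl].
  - left. nra.
  - right. assert ((r - 1) * c0 <= (r - 1) * D) by (apply Rmult_le_compat_l; lra). nra.
Qed.

Lemma L2 r D D' T c0 : 2 <= r -> 0 <= D <= 1 -> 0 <= c0 <= 1 -> T <= c0 ->
  (r + 1) * D' = (r - 1) * D + 2 * (if Rlt_dec D T then 1 else 0) ->
  (r + 1) * (D' - c0) <= (r - 1) * (D - c0) \/ (r + 1) * (D' - c0) <= 2.
Proof.
  intros Hr HD Hc HT Hs. destruct (Rlt_dec D T) as [Hl|Hl].
  - right. assert ((r - 1) * D <= (r - 1) * c0) by (apply Rmult_le_compat_l; lra). nra.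
  - left. nra.
Qed.

Section Constr.
Variables a b : R.

Definition Tt (n : nat) : R := if Nat.even (Nat.log2 (Nat.log2 n)) then b else a.

Definition dens (n e : nat) : R := 2 * INR e / (INR n * INR (n - 1)).

Fixpoint ec (n : nat) : nat :=
  match n with
  | O => O
  | S m => (ec m + if Rlt_dec (dens m (ec m)) (Tt m) then m else 0)%nat
  end.

Definition upb (m : nat) : bool := if Rlt_dec (dens m (ec m)) (Tt m) then true else false.

Definition Eg (i j : nat) : bool :=
  if (i <? j)%nat then upb j else if (j <? i)%nat then upb i else false.

Lemma Eg_sym i j : Eg i j = Eg j i.
Proof.
  unfold Eg. destruct (i <? j)%nat eqn:E1, (j <? i)%nat eqn:E2; auto.
  apply Nat.ltb_lt in E1, E2. lia.
Qed.

Lemma Eg_irr i : Eg i i = false.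
Proof. unfold Eg. rewrite Nat.ltb_irrefl. auto. Qed.

Lemma kk_Eg n : kk n Eg = if upb n then n else 0%nat.
Proof.
  unfold kk. rewrite (sum_to_ext _ (fun _ => Nat.b2n (upb n))).
  - rewrite sum_to_const. destruct (upb n); simpl; lia.
  - intros i Hi. unfold Eg. replace (n <? i)%nat with false by (symmetry; apply Nat.ltb_ge; lia).
    replace (i <? n)%nat with true by (symmetry; apply Nat.ltb_lt; lia).
    rewrite andb_diag. auto.
Qed.

Lemma Qs_Eg n : Qs n Eg = (2 * ec n)%nat.
Proof.
  induction n as [|n IH]; [reflexivity|].
  rewrite Qs_step, IH, kk_Eg. simpl ec. unfold upb.
  destruct (Rlt_dec _ _); lia.
Qed.

Definition Dd n := t_ind 2 K2_edges n Eg.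

Lemma Dd_dens n : (2 <= n)%nat -> Dd n = dens n (ec n).
Proof. intros Hn. unfold Dd, dens. rewrite t_ind2, Qs_Eg, mult_INR by auto. simpl (INR 2). lra. Qed.

Lemma Dd_step n : (2 <= n)%nat ->
  (INR n + 1) * Dd (S n) = (INR n - 1) * Dd n + 2 * (if Rlt_dec (Dd n) (Tt n) then 1 else 0).
Proof.
  intros Hn. unfold Dd at 1 2. rewrite t_ind2_step by auto. rewrite kk_Eg.
  fold (Dd n). rewrite (Dd_dens n Hn). unfold upb.
  assert (H2 : 2 <= INR n) by (replace 2 with (INR 2) by (simpl; lra); apply le_INR; lia).
  destruct (Rlt_dec _ _).
  - field. lra.
  - simpl. unfold Rdiv. lra.
Qed.

End Constr.

Lemma even2 K : Nat.even (2 * K) = true.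
Proof. apply Nat.even_spec. exists K. lia. Qed.
Lemma odd2 K : Nat.even (S (2 * K)) = false.
Proof. rewrite Nat.even_succ, <- Nat.negb_even, even2. auto. Qed.

Lemma log_block j n : (2 ^ (2 ^ j) <= n < 2 ^ (2 ^ j) * 2 ^ (2 ^ j))%nat ->
  Nat.log2 (Nat.log2 n) = j.
Proof.
  intros [H1 H2].
  assert (Hp : (0 < 2 ^ (2 ^ j))%nat) by (apply Nat.neq_0_lt_0, Nat.pow_nonzero; lia).
  rewrite <- Nat.pow_add_r in H2. replace (2 ^ j + 2 ^ j)%nat with (2 ^ S j)%nat in H2 by (simpl; lia).
  assert (Hl1 : (2 ^ j <= Nat.log2 n)%nat) by (apply (proj1 (Nat.log2_le_pow2 n (2^j) ltac:(lia))); lia).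
  assert (Hl2 : (Nat.log2 n < 2 ^ S j)%nat) by (apply (proj1 (Nat.log2_lt_pow2 n (2^S j) ltac:(lia))); lia).
  apply Nat.log2_unique; lia.
Qed.

Lemma big_s j : (j < 2 ^ (2 ^ j))%nat /\ (2 <= 2 ^ (2 ^ j))%nat.
Proof.
  assert (H1 := Nat.pow_gt_lin_r 2 j ltac:(lia)).
  assert (H2 := Nat.pow_gt_lin_r 2 (2 ^ j) ltac:(lia)).
  assert (H3 : (2 ^ 1 <= 2 ^ (2 ^ j))%nat) by (apply Nat.pow_le_mono_r; lia).
  simpl in H3. lia.
Qed.

Lemma INR2 n : (2 <= n)%nat -> 2 <= INR n.
Proof. intros; replace 2 with (INR 2) by (simpl; lra); apply le_INR; lia. Qed.

Lemma div_fix r y : 2 <= r -> r * (r - 1) * y <= 4 * r -> (r - 1) * y <= 4.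
Proof. intros. nra. Qed.

Section C2.
Variables a b : R.
Hypothesis Hab : 0 <= a <= b.
Hypothesis Hb1 : b <= 1.

Lemma Tt_range n : a <= Tt a b n <= b.
Proof. unfold Tt. destruct (Nat.even _); lra. Qed.

Lemma Dd_range n : 0 <= Dd a b n <= 1.
Proof. apply t_ind_bound. Qed.

Lemma glob_lo n : (2 <= n)%nat -> (INR n - 1) * (a - Dd a b n) <= 4.
Proof.
  intros Hn. apply div_fix; [apply INR2; auto|].
  assert (H := decay (fun k => a - Dd a b k) 2 n ltac:(lia)).
  simpl in H. assert (Hn2 := INR2 n Hn).
  assert (H' : INR n * (INR n - 1) * (a - Dd a b n) <= (1 + 1) * (1 + 1 - 1) + 2 * INR n).
  { apply H; [|assert (Hd := Dd_range 2); lra|lia].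
    intros k Hk. apply L1 with (T := Tt a b k); [apply INR2; lia|apply Dd_range|lra|apply Tt_range|].
    apply Dd_step. lia. }
  lra.
Qed.

Lemma glob_hi n : (2 <= n)%nat -> (INR n - 1) * (Dd a b n - b) <= 4.
Proof.
  intros Hn. apply div_fix; [apply INR2; auto|].
  assert (H := decay (fun k => Dd a b k - b) 2 n ltac:(lia)).
  simpl in H. assert (Hn2 := INR2 n Hn).
  assert (H' : INR n * (INR n - 1) * (Dd a b n - b) <= (1 + 1) * (1 + 1 - 1) + 2 * INR n).
  { apply H; [|assert (Hd := Dd_range 2); lra|lia].
    intros k Hk. apply L2 with (T := Tt a b k); [apply INR2; lia|apply Dd_range|lra|apply Tt_range|].
    apply Dd_step. lia. }
  lra.
Qed.

Lemma acc_in x : acc (Dd a b) x -> a <= x <= b.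
Proof.
  intros Hx. split; apply Rnot_lt_le; intro Hlt.
  - destruct (eventually_small 4 ((a - x)/2) ltac:(lra)) as [N [HN HN2]].
    destruct (Hx ((a - x)/2) ltac:(lra) N) as [n [Hn Hn2]].
    specialize (HN2 n Hn). assert (Hg := glob_lo n ltac:(lia)).
    apply Rabs_def2 in Hn2. assert (Hn3 := INR2 n ltac:(lia)). nra.
  - destruct (eventually_small 4 ((x - b)/2) ltac:(lra)) as [N [HN HN2]].
    destruct (Hx ((x - b)/2) ltac:(lra) N) as [n [Hn Hn2]].
    specialize (HN2 n Hn). assert (Hg := glob_hi n ltac:(lia)).
    apply Rabs_def2 in Hn2. assert (Hn3 := INR2 n ltac:(lia)). nra.
Qed.

Lemma block_bound (c0 : R) j (up : bool) :
  0 <= c0 <= 1 ->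
  (forall n, Tt a b n = (if Nat.even (Nat.log2 (Nat.log2 n)) then b else a)) ->
  (if Nat.even j then b else a) = c0 ->
  let s := (2 ^ (2 ^ j))%nat in
  (INR (s * s) - 1) * (c0 - Dd a b (s * s)) <= 4 /\ (INR (s * s) - 1) * (Dd a b (s * s) - c0) <= 4.
Proof.
  intros Hc HT Hj s.
  destruct (big_s j) as [_ Hs2]. fold s in Hs2.
  assert (HS := INR2 s Hs2).
  assert (Hm : INR (s * s) = INR s * INR s) by apply mult_INR.
  assert (HTb : forall n, (s <= n < s * s)%nat -> Tt a b n = c0).
  { intros n Hn. rewrite HT, (log_block j n); auto. }
  split; apply div_fix; (try (rewrite Hm; nra)).
  - assert (H := decay (fun k => c0 - Dd a b k) s (s * s) Hs2).
    simpl in H.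
    assert (H' : INR (s*s) * (INR (s*s) - 1) * (c0 - Dd a b (s*s)) <= INR s * (INR s - 1) + 2 * INR (s*s)).
    { apply H; [|assert (Hd := Dd_range s); lra|nia].
      intros k Hk. apply L1 with (T := Tt a b k); [apply INR2; lia|apply Dd_range|lra|rewrite HTb; [lra|lia]|].
      apply Dd_step. lia. }
    rewrite Hm in *. nra.
  - assert (H := decay (fun k => Dd a b k - c0) s (s * s) Hs2).
    simpl in H.
    assert (H' : INR (s*s) * (INR (s*s) - 1) * (Dd a b (s*s) - c0) <= INR s * (INR s - 1) + 2 * INR (s*s)).
    { apply H; [|assert (Hd := Dd_range s); lra|nia].
      intros k Hk. apply L2 with (T := Tt a b k); [apply INR2; lia|apply Dd_range|lra|rewrite HTb; [lra|lia]|].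
      apply Dd_step. lia. }
    rewrite Hm in *. nra.
Qed.

End C2.

Lemma acc_target a b (Hab : 0 <= a <= b) (Hb1 : b <= 1) (isb : bool) :
  acc (Dd a b) (if isb then b else a).
Proof.
  intros eps He N.
  destruct (eventually_small 4 eps He) as [N1 [HN1 HN2]].
  set (K := Nat.max N N1).
  set (j := if isb then (2 * K)%nat else S (2 * K)).
  assert (Hj : (if Nat.even j then b else a) = (if isb then b else a)).
  { unfold j. destruct isb; [rewrite even2|rewrite odd2]; auto. }
  assert (Hc : 0 <= (if isb then b else a) <= 1) by (destruct isb; lra).
  destruct (block_bound a b _ j true Hc (fun n => eq_refl) Hj) as [B1 B2].
  destruct (big_s j) as [Hs1 Hs2].
  set (s := (2 ^ (2 ^ j))%nat) in *.
  assert (Hjk : (K <= j)%nat) by (unfold j; destruct isb; lia).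
  exists (s * s)%nat. assert (Hm : (s <= s * s)%nat) by nia.
  split; [lia|].
  specialize (HN2 (s * s)%nat ltac:(lia)).
  apply Rabs_def1; nra.
Qed.

Theorem theorem4p1 (V : Type) (xi : V -> nat) (xiinv : nat -> V)
  (Hxi1 : forall v, xiinv (xi v) = v) (Hxi2 : forall n, xi (xiinv n) = n) :
  (forall (k : nat) (H : nat -> nat -> bool) (G : V -> V -> bool),
      finite_simple_graph k H -> simple_graph G ->
      closed_set (S_set xiinv k H G) /\
      (exists x, S_set xiinv k H G x) /\
      (forall x, S_set xiinv k H G x -> 0 <= x <= 1)) /\
  (forall G : V -> V -> bool, simple_graph G ->
      exists a b, 0 <= a <= b /\ b <= 1 /\
        forall x, S_set xiinv 2 K2_edges G x <-> a <= x <= b) /\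
  (forall a b : R, 0 <= a <= b -> b <= 1 ->
      exists G : V -> V -> bool, simple_graph G /\
        forall x, S_set xiinv 2 K2_edges G x <-> a <= x <= b).
Proof.
  split; [|split].
  - intros k H G _ _.
    change (S_set xiinv k H G) with (acc (fun n => t_ind k H n (G_sub xiinv G))).
    split; [apply acc_closed|]. split.
    + apply acc_nonempty. intros; apply t_ind_bound.
    + apply acc_bound. intros; apply t_ind_bound.
  - intros G _.
    change (S_set xiinv 2 K2_edges G) with (acc (fun n => t_ind 2 K2_edges n (G_sub xiinv G))).
    apply acc_is_interval.
    + intros; apply t_ind_bound.
    + apply incr_small.
  - intros a b Hab Hb1.
    exists (fun u v => Eg a b (xi u) (xi v)). split.
    + split; intros; [apply Eg_sym|apply Eg_irr].
    + assert (HG : G_sub xiinv (fun u v => Eg a b (xi u) (xi v)) = Eg a b).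
      { apply functional_extensionality; intro i. apply functional_extensionality; intro j.
        unfold G_sub. rewrite !Hxi2. reflexivity. }
      change (S_set xiinv 2 K2_edges (fun u v => Eg a b (xi u) (xi v))) with
        (acc (fun n => t_ind 2 K2_edges n (G_sub xiinv (fun u v => Eg a b (xi u) (xi v))))).
      rewrite HG. change (fun n => t_ind 2 K2_edges n (Eg a b)) with (Dd a b).
      intros x. split.
      * apply acc_in; auto.
      * apply acc_interval.
        -- apply incr_small.
        -- apply (acc_target a b Hab Hb1 false).
        -- apply (acc_target a b Hab Hb1 true).
Qed.
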